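(* Let $A=KQ/I$ be a finite-dimensional gentle algebra and let $C=c_1\cdots c_m$ be a string for $A$ with an intersecting auto-reaching given by substrings $C[i,j]$ and $C[i',j']$. Then the two substrings are oriented in the same direction in $C$: the word $c_i\cdots c_{j-1}$ equals the word $c_{i'}\cdots c_{j'-1}$, and $C[i,j]$ is not the inverse walk of $C[i',j']$.
   Context: Letters are arrows $\alpha\in Q_1$ (direct, traversed from $s(\alpha)$ to $t(\alpha)$) and formal inverses $\alpha^{-1}$ (inverse, traversed from $t(\alpha)$ to $s(\alpha)$). A string is a reduced walk (no letter followed by its own inverse) in $Q$ avoiding the relations of $I$ and their inverses; it is identified with its inverse walk. For $C=c_1\cdots c_m$ with vertex positions $v_1,\dots,v_{m+1}$ and $1\le i\le j\le m+1$, $C[i,j]=c_i\cdots c_{j-1}$ (the trivial string at $v_i$ if $i=j$). $C[i,j]$ is on top of $C$ if ($i=1$ or $c_{i-1}$ is inverse) and ($j=m+1$ or $c_j$ is direct); it is at the bottom of $C$ if ($i=1$ or $c_{i-1}$ is direct) and ($j=m+1$ or $c_j$ is inverse). An auto-reaching of $C$ is given by a substring $C[i,j]$ on top of $C$ and a substring $C[i',j']$ at the bottom of $C$ which are equal as strings (equal or mutually inverse walks) and satisfy the swinging arms condition: if $i'=1$ then $i\neq1$, and if $j'=m+1$ then $j\ne m+1$. It is intersecting if $i<i'\le j<j'$ or $i'<i\le j'<j$. *)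

(* Defs.v *)
From HB Require Import structures.
From mathcomp Require Import all_boot.
Set Implicit Arguments.
Unset Strict Implicit.
Unset Printing Implicit Defensive.

(* A bound quiver (Q, I) with I generated by paths of length two.
   Q0 = V, Q1 = Ar, s, t source and target.  rel a b (for t a = s b) means
   that the length-two path "a then b" (traversed from s a to t b) is one of
   the generating relations of I. *)
Record bquiver := BQuiver {
  V : finType;
  Ar : finType;
  src : Ar -> V;
  tgt : Ar -> V;
  rel : Ar -> Ar -> bool;
  rel_comp : forall a b, rel a b -> tgt a = src b
}.

Section Strings.
Variable Q : bquiver.

Fixpoint path_ok (p : seq (Ar Q)) : bool :=
  match p with
  | a :: ((b :: _) as p') => [&& tgt a == src b, ~~ rel a b & path_ok p']
  | _ => true
  end.

Definition gentle : Prop :=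
  (forall v : V Q, #|[pred a | src a == v]| <= 2) /\
  (forall v : V Q, #|[pred a | tgt a == v]| <= 2) /\
  (forall b : Ar Q, #|[pred a | (tgt a == src b) && rel a b]| <= 1) /\
  (forall b : Ar Q, #|[pred a | (tgt a == src b) && ~~ rel a b]| <= 1) /\
  (forall a : Ar Q, #|[pred b | (tgt a == src b) && rel a b]| <= 1) /\
  (forall a : Ar Q, #|[pred b | (tgt a == src b) && ~~ rel a b]| <= 1) /\
  (* finite dimensionality: paths not in I have bounded length *)
  (exists N, forall p : seq (Ar Q), path_ok p -> size p <= N).

Inductive letter := Dir of Ar Q | Inv of Ar Q.

Definition letter_eqb (x y : letter) : bool :=
  match x, y with
  | Dir a, Dir b => a == b
  | Inv a, Inv b => a == b
  | _, _ => false
  end.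
Lemma letter_eqP : Equality.axiom letter_eqb.
Proof.
by case=> [a|a] [b|b] /=; (try by constructor); apply: (iffP eqP) => [->|[]].
Qed.
HB.instance Definition _ := hasDecEq.Build letter letter_eqP.

Definition lsrc (x : letter) := match x with Dir a => src a | Inv a => tgt a end.
Definition ltgt (x : letter) := match x with Dir a => tgt a | Inv a => src a end.
Definition linv (x : letter) := match x with Dir a => Inv a | Inv a => Dir a end.
Definition is_direct (x : letter) := if x is Dir _ then true else false.
Definition is_inverse (x : letter) := ~~ is_direct x.

Definition step_ok (x y : letter) : bool :=
  [&& ltgt x == lsrc y, y != linv x &
      match x, y with
      | Dir a, Dir b => ~~ rel a b
      | Inv a, Inv b => ~~ rel b a
      | _, _ => true
      end].

Fixpoint steps_ok (w : seq letter) : bool :=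
  match w with
  | x :: ((y :: _) as w') => step_ok x y && steps_ok w'
  | _ => true
  end.

(* a string: a walk w starting at vertex v (w = [::] is the trivial string at v) *)
Definition is_string (v : V Q) (w : seq letter) : bool :=
  match w with
  | [::] => true
  | x :: _ => (lsrc x == v) && steps_ok w
  end.

Definition wend (v : V Q) (w : seq letter) : V Q := last v (map ltgt w).

Definition winv (w : seq letter) : seq letter := rev (map linv w).

(* 1-based notation: C = c_1 ... c_m; v_k = vpos k for 1 <= k <= m+1 *)
Definition vpos (v : V Q) (C : seq letter) (k : nat) : V Q := wend v (take k.-1 C).
(* C[i,j] = c_i ... c_(j-1) *)
Definition sub (C : seq letter) (i j : nat) : seq letter := drop i.-1 (take j.-1 C).
Definition let_at (C : seq letter) (k : nat) (d : letter) := nth d C k.-1.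

(* strings (v,w) and (v',w') are equal as strings: equal or mutually inverse walks *)
Definition str_eq (v : V Q) (w : seq letter) (v' : V Q) (w' : seq letter) : Prop :=
  (v = v' /\ w = w') \/ (v = wend v' w' /\ w = winv w').

Definition inv_at (C : seq letter) (k : nat) : bool :=
  if onth C k.-1 is Some x then (0 < k) && is_inverse x else false.
Definition dir_at (C : seq letter) (k : nat) : bool :=
  if onth C k.-1 is Some x then (0 < k) && is_direct x else false.

Definition on_top (C : seq letter) (i j : nat) : Prop :=
  (i = 1 \/ inv_at C i.-1) /\ (j = (size C).+1 \/ dir_at C j).
Definition at_bottom (C : seq letter) (i j : nat) : Prop :=
  (i = 1 \/ dir_at C i.-1) /\ (j = (size C).+1 \/ inv_at C j).

Definition auto_reaching (v : V Q) (C : seq letter) (i j i' j' : nat) : Prop :=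
  (1 <= i <= j) /\ (j <= (size C).+1) /\ (1 <= i' <= j') /\ (j' <= (size C).+1) /\
  on_top C i j /\ at_bottom C i' j' /\
  str_eq (vpos v C i) (sub C i j) (vpos v C i') (sub C i' j') /\
  (i' = 1 -> i <> 1) /\ (j' = (size C).+1 -> j <> (size C).+1).

Definition intersecting (i j i' j' : nat) : Prop :=
  (i < i' <= j /\ j < j') \/ (i' < i <= j' /\ j' < j).

End Strings.

(* Main.v *)
Require Import Defs.
From mathcomp Require Import all_boot.
From mathcomp Require Import zify.

Section Aux.
Variable Q : bquiver.

Lemma linvK' : involutive (@linv Q).
Proof. by case. Qed.

Lemma linv_neq (x : letter Q) : linv x != x.
Proof. by case: x. Qed.

Lemma winvK' : involutive (@winv Q).
Proof. by move=> w; rewrite /winv map_rev revK (mapK linvK'). Qed.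

Lemma steps_nth (C : seq (letter Q)) (d : letter Q) : steps_ok C ->
  forall k, k.+1 < size C -> nth d C k.+1 != linv (nth d C k).
Proof.
elim: C => [|x [|y C] IH] //= /andP[Hs Hr] [|k] Hk /=.
  by case/and3P: Hs.
exact: (IH Hr k).
Qed.

Lemma refl_aux (C : seq (letter Q)) (d : letter Q) n : steps_ok C -> forall lo hi,
  hi - lo <= n -> lo <= hi -> hi < size C ->
  (forall p, lo <= p <= hi -> nth d C p = linv (nth d C (lo + hi - p))) -> False.
Proof.
move=> Hs; elim: n => [|n IH] lo hi Hn Hlh Hhi H.
  have E : hi = lo by lia.
  have := H lo; rewrite E addnK leqnn => /(_ isT) Hx.
  by move: (linv_neq (nth d C lo)); rewrite -Hx eqxx.
case: (ltnP (lo.+1) hi) => Hlt.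
  apply: (IH lo.+1 hi.-1) => //; try lia.
  move=> p Hp; have -> : lo.+1 + hi.-1 - p = lo + hi - p by lia.
  apply: H; lia.
case: (eqVneq lo hi) => [E|Ne].
  have := H lo; rewrite -E addnK leqnn => /(_ isT) Hx.
  by move: (linv_neq (nth d C lo)); rewrite -Hx eqxx.
have E : hi = lo.+1 by lia.
have := H lo; rewrite E leqnn leqnSn => /(_ isT).
have -> : lo + lo.+1 - lo = lo.+1 by lia.
move=> Hx.
have Hk : lo.+1 < size C by lia.
by move: (@steps_nth C d Hs lo Hk); rewrite Hx linvK' eqxx.
Qed.

Lemma core (C : seq (letter Q)) (d : letter Q) (s s' L : nat) : steps_ok C ->
  0 < L -> s <= s' <= s + L -> s' + L <= size C ->
  drop s (take (s + L) C) = winv (drop s' (take (s' + L) C)) -> False.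
Proof.
move=> Hs HL Hb Hsz E.
have nthw : forall a k, k < L -> a + L <= size C ->
    nth d (drop a (take (a + L) C)) k = nth d C (a + k).
  by move=> a k Hk Ha; rewrite nth_drop nth_take //; lia.
have szw : forall a, a + L <= size C -> size (drop a (take (a + L) C)) = L.
  by move=> a Ha; rewrite size_drop size_takel; lia.
have H1 : forall k, k < L -> nth d C (s + k) = linv (nth d C (s' + (L - k.+1))).
  move=> k Hk; rewrite -nthw //; last lia.
  have Hs' : s' + L <= size C by lia.
  have Hs0 : s + L <= size C by lia.
  rewrite E /winv nth_rev; last by rewrite size_map szw.
  rewrite size_map szw // (nth_map d); last by rewrite szw //; lia.
  by rewrite nthw //; lia.
apply: (@refl_aux C d (s' + L - 1 - s) Hs s (s' + L - 1)); try lia.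
move=> p Hp.
case: (ltnP p (s + L)) => Hps.
  have := H1 (p - s); rewrite (_ : s + (p - s) = p); last lia.
  rewrite (_ : s' + (L - (p - s).+1) = s + (s' + L - 1) - p); last lia.
  apply; lia.
have := H1 (s' + L - 1 - p).
rewrite (_ : s' + (L - (s' + L - 1 - p).+1) = p); last lia.
rewrite (_ : s + (s' + L - 1 - p) = s + (s' + L - 1) - p); last lia.
move=> /(_ ltac:(lia)) ->; by rewrite linvK'.
Qed.

End Aux.

Theorem mainTheorem7 (Q : bquiver) (v : V Q) (C : seq (letter Q))
    (i j i' j' : nat) :
  gentle Q ->
  is_string v C ->
  auto_reaching v C i j i' j' ->
  intersecting i j i' j' ->
  sub C i j = sub C i' j' /\ sub C i j <> winv (sub C i' j').
Proof.
move=> _ Hstr [H1 [H2 [H3 [H4 [_ [_ [Heq _]]]]]]] Hint.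
have Hs : steps_ok C by move: Hstr; rewrite /is_string; case: (C) => //= x ? /andP[].
have subE : forall a b, 1 <= a <= b -> b <= (size C).+1 ->
    sub C a b = drop a.-1 (take (a.-1 + (b - a)) C).
  by move=> a b Ha Hb; rewrite /sub; congr (drop _ (take _ _)); lia.
have szs : forall a b, 1 <= a <= b -> b <= (size C).+1 ->
    size (sub C a b) = b - a.
  by move=> a b Ha Hb; rewrite /sub size_drop size_takel; lia.
have [d _] : exists d : letter Q, True.
  case E0: C => [|x C']; last by exists x.
  by rewrite E0 /= in H2 H4; rewrite /intersecting in Hint; lia.
have nonself : forall a b, 1 <= a < b -> b <= (size C).+1 ->
    sub C a b <> winv (sub C a b).
  move=> a b Hab Hb E.
  apply: (@core Q C d a.-1 a.-1 (b - a) Hs); try lia.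
  by rewrite -!subE //; lia.
case: Heq => [[_ E]|[_ E]].
  split => //; rewrite E; apply: nonself => //; rewrite /intersecting in Hint; lia.
exfalso.
have HL : j - i = j' - i'.
  by rewrite -szs // -(szs i' j') // E /winv size_rev size_map.
case: Hint => Hint.
  apply: (@core Q C d i.-1 i'.-1 (j - i) Hs); try lia.
  by rewrite -subE; [rewrite HL -subE //|lia|lia].
apply: (@core Q C d i'.-1 i.-1 (j - i) Hs); try lia.
rewrite -subE; [rewrite HL -subE //|lia|lia].
by rewrite E winvK'.
Qed.
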